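(* Let $X$ be a Hausdorff $k_\omega$-space, let $Y$ be a Hausdorff topological space, and let $f:X\to Y$ be an injective continuous map. Then $f$ is regular.
   Context: A topological space $X$ is a $k_\omega$-space if there is a countable cover $\mathcal K$ of $X$ by compact subsets that determines the topology of $X$: a set $U\subset X$ is open in $X$ if and only if $U\cap K$ is open in $K$ for every $K\in\mathcal K$. A continuous map $h:X\to Y$ between topological spaces is called regular if for each point $x\in X$ and each neighborhood $U$ of $x$ in $X$ there is a closed subset $F\subset Y$ such that $h^{-1}(F)$ is a closed neighborhood of $x$ with $h^{-1}(F)\subset U$. *)

(* Defs.v *)
From HB Require Import structures.
From mathcomp Require Import all_boot all_order all_algebra.
From mathcomp Require Import all_classical all_reals all_analysis.
Set Implicit Arguments. Unset Strict Implicit. Unset Printing Implicit Defensive.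
Local Open Scope classical_set_scope.

Definition rel_open {X : topologicalType} (K U : set X) : Prop :=
  exists V : set X, open V /\ U `&` K = V `&` K.

Definition k_omega_space (X : topologicalType) : Prop :=
  exists KK : set (set X),
    countable KK /\
    (forall K, KK K -> compact K) /\
    \bigcup_(K in KK) K = setT /\
    (forall U : set X, open U <-> (forall K, KK K -> rel_open K (U `&` K))).

Definition regular_map {X Y : topologicalType} (h : X -> Y) : Prop :=
  continuous h /\
  forall (x : X) (U : set X), nbhs x U ->
    exists F : set Y, closed F /\ closed (h @^-1` F) /\ nbhs x (h @^-1` F) /\
      h @^-1` F `<=` U.

(* Main.v *)
Require Import Defs.
From mathcomp Require Import all_boot all_order all_algebra.
From mathcomp Require Import all_classical all_reals all_analysis.
Local Open Scope classical_set_scope.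

Lemma closed_pre {X Y : topologicalType} {f : X -> Y} :
  continuous f -> forall Z, closed Z -> closed (f @^-1` Z).
Proof.
move=> cf Z cZ; rewrite -[f @^-1` Z]setCK; apply: open_closedC.
rewrite preimage_setC; apply: open_comp; last exact: closed_openC.
by move=> *; exact: cf.
Qed.

Lemma sepL1 {T : topologicalType} (C K : set T) : compact K ->
  (forall y, K y -> exists B, nbhs y B /\ C `&` closure B = set0) ->
  exists W, open W /\ C `<=` W /\ K `&` closure W = set0.
Proof.
move=> cK hK; apply: contrapT => nW.
pose G := filter_from [set W : set T | open W /\ C `<=` W]
  (fun W => K `&` closure W).
have GF : ProperFilter G.
  apply: filter_from_proper.
    apply: filter_from_filter.
      by exists setT; split => //; exact: openT.
    move=> W1 W2 [H1 c1] [H2 c2].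
    exists (W1 `&` W2).
      split; first by apply: openI.
      by move=> z Cz; split; [exact: c1|exact: c2].
    move=> z [Kz cz]; split; split => //.
      by apply: (closureS _ cz) => w [].
    by apply: (closureS _ cz) => w [].
  move=> W [oW cW]; apply/set0P/eqP => e; apply: nW; exists W; split => //.
have GK : G K by exists setT; [split => //; exact: openT | move=> z []].
have [y [Ky cly]] := cK G GF GK.
have [B [By CB]] := hK y Ky.
have Gs : G (K `&` closure (~` closure B)).
  exists (~` closure B) => //; split; first exact/closed_openC/closed_closure.
  move=> z Cz clz; have : (C `&` closure B) z by [].
  by rewrite CB.
have [z [[Kz clz] Bz]] := cly _ _ Gs (nbhs_interior By).
have : nbhs z B° by apply: open_nbhs_nbhs; split => //; exact: open_interior.
move=> /clz [w [/= nw Bw]]; apply: nw; apply: subset_closure.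
exact: interior_subset.
Qed.

Lemma sep_pt_pt {T : topologicalType} : hausdorff_space T ->
  forall x y : T, x <> y -> exists B, nbhs y B /\ [set x] `&` closure B = set0.
Proof.
move=> hT x y xy; move: hT; rewrite open_hausdorff => /(_ x y).
have /eqP xy' := xy; move=> /(_ xy') [[A B] /= [Ax By] [oA oB AB]].
exists B; split; first by apply: open_nbhs_nbhs; split => //; rewrite inE in By.
rewrite -subset0 => z [/= -> clB].
have : nbhs x A by apply: open_nbhs_nbhs; split => //; rewrite inE in Ax.
move=> /clB [w [Bw Aw]]; move/eqP: AB; rewrite -subset0; apply.
by split; eassumption.
Qed.

Lemma sep_cpt {T : topologicalType} : hausdorff_space T ->
  forall K1 K2 : set T, compact K1 -> compact K2 -> K1 `&` K2 = set0 ->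
  exists W, open W /\ K2 `<=` W /\ K1 `&` closure W = set0.
Proof.
move=> hT K1 K2 c1 c2 K12; apply: sepL1 => // y K1y.
have [W [HW [Wy K2W]]] : exists W, open W /\ [set y] `<=` W /\ K2 `&` closure W = set0.
  apply: sepL1 => // z K2z; apply: sep_pt_pt => // yz.
  have : (K1 `&` K2) y by split => //; rewrite yz.
  by rewrite K12.
exists W; split; first by apply: open_nbhs_nbhs; split => //; exact: Wy.
exact: K2W.
Qed.

Lemma cimg {X Y : topologicalType} {f : X -> Y} :
  continuous f -> forall {A}, compact A -> compact (f @` A).
Proof. by move=> cf A cA; apply: continuous_compact => //; exact: continuous_subspaceT. Qed.

Lemma stepL {X Y : topologicalType} (f : X -> Y) :
  hausdorff_space Y -> injective f -> continuous f ->
  forall (U L C : set X) (Z : set Y), open U -> compact L -> compact C ->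
  C `<=` U -> closed Z -> C `&` f @^-1` Z = set0 ->
  exists P C' O, open P /\ C `<=` f @^-1` P /\ L `&` f @^-1` P `<=` C' /\
    C `<=` C' /\ compact C' /\ C' `<=` U /\ open O /\
    L `&` ~` U `<=` f @^-1` O /\ closed (Z `|` closure O) /\
    C' `&` f @^-1` (Z `|` closure O) = set0.
Proof.
move=> hY inj cf U L C Z oU cL cC CU cZ CZ.
pose B := (L `&` f @^-1` Z) `|` (L `&` ~` U).
have cB : compact B.
  apply: compactU; apply: compact_closedI => //; first exact: closed_pre.
  exact: open_closedC.
have dCB : f @` C `&` f @` B = set0.
  rewrite -subset0 => _ [[c Cc <-] [b Bb /inj eb]]; subst b.
  case: Bb => -[_ Hb].
    by have : (C `&` f @^-1` Z) c by []; rewrite CZ.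
  exact: Hb (CU _ Cc).
have [W [HW [BW CW]]] := sep_cpt hY _ _ (cimg cf cC) (cimg cf cB) dCB.
pose C' := C `|` (L `&` f @^-1` (~` W)).
have C'U : C' `<=` U.
  move=> z [//|[Lz Wz]]; first exact: CU.
  apply: contrapT => Uz; apply: Wz; apply: BW; exists z => //; by right.
have cC' : compact C'.
  apply: compactU => //; apply: compact_closedI => //; apply: closed_pre => //.
  exact: open_closedC.
have dCO : f @` C' `&` f @` (L `&` ~` U) = set0.
  rewrite -subset0 => _ [[c Cc <-] [b [_ Ub] /inj eb]]; subst b.
  exact: Ub (C'U _ Cc).
have [Oy [HO [LO CO]]] := sep_cpt hY _ _ (cimg cf cC') (cimg cf (compact_closedI cL (open_closedC oU))) dCO.
exists (~` closure W), C', Oy; split.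
  exact/closed_openC/closed_closure.
split.
  move=> c Cc /= clW; have : (f @` C `&` closure W) (f c) by split => //; exists c.
  by rewrite CW.
split.
  by move=> z [Lz /= nW]; right; split => // Wz; apply: nW; exact: subset_closure.
split; first by move=> z Cz; left.
do 3 (split => //).
split; first by move=> z Lz; apply: LO; exists z.
split; first by apply: closedU => //; exact: closed_closure.
rewrite -subset0 => z [C'z [Zz|Oz]].
  case: C'z => [Cz|[Lz /= nW]].
    by have : (C `&` f @^-1` Z) z by []; rewrite CZ.
  by apply: nW; apply: BW; exists z => //; left.
have : (f @` C' `&` closure Oy) (f z) by split => //; exists z.
by rewrite CO.
Qed.

Lemma enum_cnt {T : Type} (KK : set (set T)) : countable KK ->
  exists k : nat -> set T, exists g : set T -> nat,
    (forall n, KK (k n) \/ k n = set0) /\ (forall K, KK K -> k (g K) = K).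
Proof.
move=> /countable_injP [g ginj].
have : forall n, exists K, (KK K \/ K = set0) /\
    (forall K', KK K' -> g K' = n -> K = K').
  move=> n; case: (pselect (exists K', KK K' /\ g K' = n)).
    move=> [K' [KK' gK']]; exists K'; split; first by left.
    move=> K'' KK'' gK''; apply: ginj; rewrite ?inE //; congruence.
  move=> nE; exists set0; split; first by right.
  by move=> K' KK' gK'; exfalso; apply: nE; exists K'.
move=> /choice [k hk]; exists k, g; split; first by move=> n; case: (hk n).
by move=> K KK'; case: (hk (g K)) => _ /(_ K KK' erefl).
Qed.

Definition Inv {X Y : topologicalType} (f : X -> Y) (U : set X)
  (s : set X * set Y) :=
  compact s.1 /\ s.1 `<=` U /\ closed s.2 /\ s.1 `&` f @^-1` s.2 = set0.

Definition Spec {X Y : topologicalType} (f : X -> Y) (U L : set X)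
  (s : set X * set Y) (o : (set Y * set X) * (set Y * set Y)) :=
  open o.1.1 /\ s.1 `<=` f @^-1` o.1.1 /\ L `&` f @^-1` o.1.1 `<=` o.1.2 /\
  s.1 `<=` o.1.2 /\ open o.2.1 /\ L `&` ~` U `<=` f @^-1` o.2.1 /\
  s.2 `<=` o.2.2 /\ closure o.2.1 `<=` o.2.2 /\ Inv f U (o.1.2, o.2.2).

Lemma stepS {X Y : topologicalType} (f : X -> Y) :
  hausdorff_space Y -> injective f -> continuous f ->
  forall (U L : set X), open U -> compact L ->
  forall s, exists o, Inv f U s -> Spec f U L s o.
Proof.
move=> hY inj cf U L oU cL [C Z].
case: (pselect (Inv f U (C, Z))); last first.
  by move=> nI; exists ((set0, set0), (set0, set0)) => /nI.
move=> [/= cC [CU [cZ CZ]]].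
have [P [C' [Oy [? [? [? [? [cC' [C'U [? [? [? ?]]]]]]]]]]]] :=
  stepL f hY inj cf _ _ _ _ oU cL cC CU cZ CZ.
exists ((P, C'), (Oy, Z `|` closure Oy)) => _.
do 6 (split => //).
split; first by move=> ? ?; left.
split; first by move=> ? ?; right.
done.
Qed.

Theorem proposition1 (X Y : topologicalType) (f : X -> Y) :
  hausdorff_space X -> k_omega_space X -> hausdorff_space Y ->
  injective f -> continuous f -> regular_map f.
Proof.
move=> _ [KK [cKK [cpt [cov kw]]]] hY inj cf; split => // x U0.
rewrite nbhsE => -[U [oU Ux] UU0].
have [k [g [kK gk]]] := enum_cnt _ cKK.
pose L : nat -> set X := fix L n := if n is m.+1 then L m `|` k n else k 0.
have ck n : compact (k n) by case: (kK n) => [/cpt //|->]; exact: compact0.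
have cL n : compact (L n) by elim: n => [|n IH] //=; exact: compactU.
have Lmono m n : (m <= n)%N -> L m `<=` L n.
  elim: n => [|n IH]; first by rewrite leqn0 => /eqP ->.
  rewrite leq_eqVlt => /orP [/eqP -> //|]; rewrite ltnS => /IH mn z Lz.
  by left; apply: mn.
have kL n : k n `<=` L n by case: n => [//|n] z kz; right.
have [stp hstp] := choice (fun ns : nat * (set X * set Y) =>
  stepS f hY inj cf U (L ns.1) oU (cL ns.1) ns.2).
pose st : nat -> set X * set Y := fix st n :=
  if n is m.+1 then ((stp (m, st m)).1.2, (stp (m, st m)).2.2)
  else ([set x], set0).
have Ist n : Inv f U (st n).
  elim: n => [|n IH].
    split; first exact: compact_set1.
    split; first by move=> z /= ->.
    split; first exact: closed0.
    by rewrite preimage_set0 setI0.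
  by have := hstp (n, st n) IH => -[_ [_ [_ [_ [_ [_ [_ [_ I]]]]]]]].
have Sp n : Spec f U (L n) (st n) (stp (n, st n)) := hstp (n, st n) (Ist n).
pose C n := (st n).1.
pose Z n := (st n).2.
pose P n := (stp (n, st n)).1.1.
pose O' n := (stp (n, st n)).2.1.
have Cle m n : (m <= n)%N -> C m `<=` C n.
  elim: n => [|n IH]; first by rewrite leqn0 => /eqP ->.
  rewrite leq_eqVlt => /orP [/eqP -> //|]; rewrite ltnS => /IH mn z Cz.
  by have [_ [_ [_ [H _]]]] := Sp n; apply: H; apply: mn.
have Zle m n : (m <= n)%N -> Z m `<=` Z n.
  elim: n => [|n IH]; first by rewrite leqn0 => /eqP ->.
  rewrite leq_eqVlt => /orP [/eqP -> //|]; rewrite ltnS => /IH mn z Cz.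
  by have [_ [_ [_ [_ [_ [_ [H _]]]]]]] := Sp n; apply: H; apply: mn.
have xC n : C n x by apply: (Cle 0%N) => //.
have CP n : C n `<=` f @^-1` P n by have [_ [H _]] := Sp n.
have LPC n : L n `&` f @^-1` P n `<=` C n.+1 by have [_ [_ [H _]]] := Sp n.
have oP n : open (P n) by have [H _] := Sp n.
have oO n : open (O' n) by have [_ [_ [_ [_ [H _]]]]] := Sp n.
have LO n : L n `&` ~` U `<=` f @^-1` O' n.
  by have [_ [_ [_ [_ [_ [H _]]]]]] := Sp n.
have OZ n : O' n `<=` Z n.+1.
  have [_ [_ [_ [_ [_ [_ [_ [H _]]]]]]]] := Sp n.
  by move=> y Oy; apply: H; apply: subset_closure.
have Odisj m j z : C m z -> ~ O' j (f z).
  move=> Cz Oz; have [_ [_ [_ H]]] := Ist (maxn m j.+1).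
  have : (C (maxn m j.+1) `&` f @^-1` Z (maxn m j.+1)) z.
    split; first by apply: (Cle m) => //; exact: leq_maxl.
    by apply: (Zle j.+1); [exact: leq_maxr | exact: OZ].
  by rewrite /C /Z H.
pose F := ~` \bigcup_(j in setT) O' j.
exists F; split.
  by apply: open_closedC; apply: bigcup_open => j _; exact: oO.
split; first by apply: closed_pre => //; apply: open_closedC; apply: bigcup_open.
split; last first.
  move=> z Fz; apply: UU0; apply: contrapT => Uz.
  have : setT z by [].
  rewrite -cov => -[K KKK Kz]; apply: Fz; exists (g K) => //.
  by apply: LO; split => //; apply: kL; rewrite gk.
simpl; exists (\bigcup_(n in setT) (L n `&` f @^-1` P n)); last first.
  move=> z [n _ /LPC Cz] [j _ Oz]; exact: Odisj Cz Oz.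
split; last first.
  have : setT x by [].
  rewrite -cov => -[K KKK Kx]; exists (g K) => //; split.
    by apply: kL; rewrite gk.
  exact: CP.
apply/kw => K KKK.
exists (\bigcup_(n in setT) f @^-1` P (n + g K)%N); split.
  apply: bigcup_open => n _; apply: open_comp => //; by move=> *; exact: cf.
rewrite eqEsubset; split.
  move=> z [[[n _ [Lz Pz]] Kz] _]; split => //.
  case: (leqP (g K) n) => gn.
    by exists (n - g K)%N => //=; rewrite subnK.
  exists 0%N => //=; apply: CP; apply: (Cle n.+1) => //.
  exact: LPC.
move=> z [[n _ Pz] Kz]; split => //; split => //; exists (n + g K)%N => //.
split => //; apply: (Lmono (g K)); first exact: leq_addl.
by apply: kL; rewrite gk.
Qed.
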